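(* Let $R$ be a principal ideal domain and let $a\in R$ be nonzero. Assume that $a$ has a non-unit bounded factor, i.e. there exist $r,s,p\in R$ with $a=rps$ and $p$ a bounded non-unit. Then $a$ is c-irreducible if and only if $a$ is irreducible.
   Context: A principal ideal domain (PID) is a (not necessarily commutative) domain in which every left ideal and every right ideal is principal. An element $p$ is bounded if $Rp$ contains a nonzero two-sided ideal. A non-unit $a$ is irreducible if $a=bc$ implies $b$ or $c$ is a unit. Elements $b,c$ are similar if $R/Rb\cong R/Rc$ as left $R$-modules. A nonzero $a$ is c-reducible if $a=bb'=c'c$ for some non-units $b,b',c',c\in R$ with $b$ similar to $c$; an element that is not c-reducible is c-irreducible. *)

(* Defs.v *)
From HB Require Import structures.
From mathcomp Require Import all_boot all_order all_algebra.
Set Implicit Arguments. Unset Strict Implicit. Unset Printing Implicit Defensive.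
Import GRing.Theory.
Local Open Scope ring_scope.

Section NCPID.
Variable R : unitRingType.

(* no zero divisors (1 != 0 holds in any unitRingType) *)
Definition nc_domain : Prop := forall x y : R, x * y = 0 -> x = 0 \/ y = 0.

Definition additive_subgroup (I : R -> Prop) : Prop :=
  I 0 /\ (forall x y, I x -> I y -> I (x - y)).

Definition left_ideal (I : R -> Prop) : Prop :=
  additive_subgroup I /\ (forall r x, I x -> I (r * x)).

Definition right_ideal (I : R -> Prop) : Prop :=
  additive_subgroup I /\ (forall r x, I x -> I (x * r)).

Definition twosided_ideal (I : R -> Prop) : Prop := left_ideal I /\ right_ideal I.

Definition lmult (x : R) : R -> Prop := fun y => exists r, y = r * x.
Definition rmult (x : R) : R -> Prop := fun y => exists r, y = x * r.

Definition is_PID : Prop :=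
  nc_domain /\
  (forall I, left_ideal I -> exists g, forall y, I y <-> lmult g y) /\
  (forall I, right_ideal I -> exists g, forall y, I y <-> rmult g y).

Definition bounded (p : R) : Prop :=
  exists I, twosided_ideal I /\ (exists x, I x /\ x <> 0) /\
            (forall x, I x -> lmult p x).

Definition irreducible_elt (a : R) : Prop :=
  a \isn't a GRing.unit /\
  (forall b c, a = b * c -> b \is a GRing.unit \/ c \is a GRing.unit).

(* b and c are similar: R/Rb ~= R/Rc as left R-modules.  A left R-module
   isomorphism R/Rb -> R/Rc is described through a map on representatives
   f : R -> R that is well defined, additive and R-linear modulo Rc,
   injective on classes and surjective on classes. *)
Definition lmod_iso_quot (b c : R) (f : R -> R) : Prop :=
  (forall x y, lmult b (x - y) -> lmult c (f x - f y)) /\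
  (forall x y, lmult c (f (x + y) - (f x + f y))) /\
  (forall r x, lmult c (f (r * x) - r * f x)) /\
  (forall x y, lmult c (f x - f y) -> lmult b (x - y)) /\
  (forall z, exists x, lmult c (f x - z)).

Definition similar (b c : R) : Prop := exists f, lmod_iso_quot b c f.

Definition c_reducible (a : R) : Prop :=
  a <> 0 /\
  exists b b' c' c : R,
    a = b * b' /\ a = c' * c /\
    b \isn't a GRing.unit /\ b' \isn't a GRing.unit /\
    c' \isn't a GRing.unit /\ c \isn't a GRing.unit /\ similar b c.

Definition c_irreducible (a : R) : Prop := ~ c_reducible a.

End NCPID.

(* Main.v *)
Require Import Defs.
From mathcomp Require Import all_boot all_order all_algebra.
From Stdlib Require Import ClassicalEpsilon.
Set Implicit Arguments. Unset Strict Implicit. Unset Printing Implicit Defensive.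
Import GRing.Theory.
Local Open Scope ring_scope.

Lemma cancel_r (R : unitRingType) (HD : nc_domain R) (x u v : R) :
  x <> 0 -> u * x = v * x -> u = v.
Proof.
move=> x0 e; have : (u - v) * x = 0 by rewrite mulrBl e subrr.
by case/HD=> // /eqP; rewrite subr_eq0 => /eqP.
Qed.

Lemma cancel_l (R : unitRingType) (HD : nc_domain R) (x u v : R) :
  x <> 0 -> x * u = x * v -> u = v.
Proof.
move=> x0 e; have : x * (u - v) = 0 by rewrite mulrBr e subrr.
by case/HD=> // /eqP; rewrite subr_eq0 => /eqP.
Qed.

Lemma linv_unit (R : unitRingType) (HD : nc_domain R) (x y : R) :
  y * x = 1 -> x \is a GRing.unit /\ y \is a GRing.unit.
Proof.
move=> e.
have x0 : x <> 0 by move=> x0; move: e; rewrite x0 mulr0 => /eqP; rewrite eq_sym oner_eq0.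
have e2 : x * y = 1.
  apply: (@cancel_r _ HD x) => //.
  by rewrite -mulrA e mulr1 mul1r.
by split; apply/unitrP; [exists y | exists x].
Qed.

Lemma lm_self (R : unitRingType) (a : R) : lmult a a.
Proof. by exists 1; rewrite mul1r. Qed.
Lemma lm_mul (R : unitRingType) (a r y : R) : lmult a y -> lmult a (r * y).
Proof. by case=> u ->; exists (r * u); rewrite mulrA. Qed.
Lemma lm_mulr (R : unitRingType) (a r : R) : lmult a (r * a).
Proof. by exists r. Qed.
Lemma lm0 (R : unitRingType) (a : R) : lmult a 0.
Proof. by exists 0; rewrite mul0r. Qed.
Lemma lmB (R : unitRingType) (a x y : R) : lmult a x -> lmult a y -> lmult a (x - y).
Proof. by case=> u -> [v ->]; exists (u - v); rewrite mulrBl. Qed.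
Lemma lmD (R : unitRingType) (a x y : R) : lmult a x -> lmult a y -> lmult a (x + y).
Proof. by case=> u -> [v ->]; exists (u + v); rewrite mulrDl. Qed.
Lemma lmN (R : unitRingType) (a x : R) : lmult a x -> lmult a (- x).
Proof. by case=> u ->; exists (- u); rewrite mulNr. Qed.
Lemma lm_li (R : unitRingType) (a : R) : left_ideal (lmult a).
Proof. split; [split; [exact: lm0 | exact: lmB] | exact: lm_mul]. Qed.

Lemma rm_self (R : unitRingType) (a : R) : rmult a a.
Proof. by exists 1; rewrite mulr1. Qed.
Lemma rm_ri (R : unitRingType) (a : R) : right_ideal (rmult a).
Proof.
split; [split|].
- by exists 0; rewrite mulr0.
- by move=> x y [u ->] [v ->]; exists (u - v); rewrite mulrBr.
- by move=> r x [u ->]; exists (u * r); rewrite mulrA.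
Qed.

Lemma li_mono (R : unitRingType) (K : nat -> R -> Prop) :
  (forall n y, K n y -> K n.+1 y) -> forall n m y, (n <= m)%N -> K n y -> K m y.
Proof.
move=> H n m y /subnK <-; elim: (m - n)%N => [|k IH] // /IH; rewrite addSn; exact: H.
Qed.

Lemma acc_left (R : unitRingType) (HR : is_PID R) (K : nat -> R -> Prop) :
  (forall n, left_ideal (K n)) -> (forall n y, K n y -> K n.+1 y) ->
  exists N, forall m y, K m y -> K N y.
Proof.
move=> Hi Hm; set U := fun y => exists n, K n y.
have HU : left_ideal U.
  split; [split|].
  - by exists 0%N; case: (Hi 0%N) => [[]].
  - move=> x y [n Hx] [m Hy]; exists (maxn n m).
    case: (Hi (maxn n m)) => [[_ Hs] _]; apply: Hs.
    + by apply: (li_mono Hm _ Hx); rewrite leq_maxl.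
    + by apply: (li_mono Hm _ Hy); rewrite leq_maxr.
  - by move=> r x [n Hx]; exists n; case: (Hi n) => _; apply.
case: HR => _ [HL _]; case: (HL U HU) => g Hg.
case: ((Hg g).2 (lm_self g)) => N HN; exists N => m y Hy.
case: ((Hg y).1 (ex_intro _ m Hy)) => r ->.
by case: (Hi N) => _; apply.
Qed.

Lemma acc_right (R : unitRingType) (HR : is_PID R) (K : nat -> R -> Prop) :
  (forall n, right_ideal (K n)) -> (forall n y, K n y -> K n.+1 y) ->
  exists N, forall m y, K m y -> K N y.
Proof.
move=> Hi Hm; set U := fun y => exists n, K n y.
have HU : right_ideal U.
  split; [split|].
  - by exists 0%N; case: (Hi 0%N) => [[]].
  - move=> x y [n Hx] [m Hy]; exists (maxn n m).
    case: (Hi (maxn n m)) => [[_ Hs] _]; apply: Hs.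
    + by apply: (li_mono Hm _ Hx); rewrite leq_maxl.
    + by apply: (li_mono Hm _ Hy); rewrite leq_maxr.
  - by move=> r x [n Hx]; exists n; case: (Hi n) => _; apply.
case: HR => _ [_ HL]; case: (HL U HU) => g Hg.
case: ((Hg g).2 (rm_self g)) => N HN; exists N => m y Hy.
case: ((Hg y).1 (ex_intro _ m Hy)) => r ->.
by case: (Hi N) => _; apply.
Qed.

Lemma choice_fun (A B : Type) (P : A -> B -> Prop) :
  (forall x, exists y, P x y) -> exists f, forall x, P x (f x).
Proof. exact: choice. Qed.

Lemma li_anti (R : unitRingType) (K : nat -> R -> Prop) :
  (forall n y, K n.+1 y -> K n y) -> forall n m y, (n <= m)%N -> K m y -> K n y.
Proof.
move=> H n m y /subnK <-; elim: (m - n)%N => [|k IH] //; rewrite addSn => /H; exact: IH.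
Qed.

Lemma dcc_left (R : unitRingType) (HR : is_PID R) (a : R) (a0 : a <> 0)
  (L : nat -> R -> Prop) :
  (forall n, left_ideal (L n)) -> (forall n y, L n.+1 y -> L n y) -> (forall n, L n a) ->
  exists N, forall m y, (N <= m)%N -> L N y -> L m y.
Proof.
move=> Hi Hm Ha.
have HD : nc_domain R by case: HR.
have [d Hd] : exists d : nat -> R, forall n y, L n y <-> lmult (d n) y.
  apply: (@choice_fun _ _ (fun n g => forall y, L n y <-> lmult g y)) => n.
  by case: HR => _ [HL _]; apply: HL.
have [e He] : exists e : nat -> R, forall n, a = e n * d n.
  apply: (@choice_fun _ _ (fun n g => a = g * d n)) => n.
  by case: ((Hd n a).1 (Ha n)) => r ->; exists r.
have d0 n : d n <> 0 by move=> h; apply: a0; rewrite (He n) h mulr0.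
have e0 n : e n <> 0 by move=> h; apply: a0; rewrite (He n) h mul0r.
have step n m : (n <= m)%N -> exists u, e n = e m * u /\ d m = u * d n.
  move=> nm; have : L n (d m) by apply: (li_anti Hm nm); apply/Hd; apply: lm_self.
  case/Hd => u du; exists u; split => //.
  apply: (@cancel_r _ HD (d n)) => //; by rewrite -mulrA -du -!He.
have asc n y : rmult (e n) y -> rmult (e n.+1) y.
  case=> r ->; have [u [h1 _]] := step n n.+1 (leqnSn n).
  by exists (u * r); rewrite h1 mulrA.
have [N HN] := @acc_right _ HR (fun n => rmult (e n)) (fun n => rm_ri (e n)) asc.
exists N => m y Nm /Hd [r ->].
have [u [h1 h2]] := step N m Nm.
have [v hv] := HN m (e m) (rm_self _).
have vu : v * u = 1.
  apply: (@cancel_l _ HD (e N)) => //; by rewrite mulr1 mulrA -hv -h1.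
apply/Hd; exists (r * v); by rewrite -mulrA h2 (mulrA v) vu mul1r.
Qed.

Lemma inv_comm (R : unitRingType) (HD : nc_domain R) (x y : R) : y * x = 1 -> x * y = 1.
Proof.
move=> e.
have x0 : x <> 0 by move=> x0; move: e; rewrite x0 mulr0 => /eqP; rewrite eq_sym oner_eq0.
apply: (@cancel_r _ HD x) => //; by rewrite -mulrA e mulr1 mul1r.
Qed.

Definition invar (R : unitRingType) (g : R) :=
  (forall z, exists z', z * g = g * z') /\ (forall z, exists z', g * z = z' * g).

Lemma invar_mul (R : unitRingType) (g h : R) : invar g -> invar h -> invar (g * h).
Proof.
move=> [g1 g2] [h1 h2]; split=> z.
- have [z1 e1] := g1 z; have [z2 e2] := h1 z1.
  by exists z2; rewrite mulrA e1 -mulrA e2 mulrA.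
- have [z1 e1] := h2 z; have [z2 e2] := g2 z1.
  by exists z2; rewrite -mulrA e1 mulrA e2 mulrA.
Qed.

Lemma invar_exp (R : unitRingType) (g : R) n : invar g -> invar (g ^+ n).
Proof.
move=> Hg; elim: n => [|n IH].
- by rewrite expr0; split=> z; exists z; rewrite mul1r mulr1.
- by rewrite exprS; apply: invar_mul.
Qed.

Lemma exp_neq0 (R : unitRingType) (HD : nc_domain R) (g : R) n : g <> 0 -> g ^+ n <> 0.
Proof.
move=> g0; elim: n => [|n IH]; first by rewrite expr0 => /eqP; rewrite oner_eq0.
by rewrite exprS => /HD [].
Qed.

Lemma twosided_gen (R : unitRingType) (HR : is_PID R) (I : R -> Prop) :
  twosided_ideal I -> (exists x, I x /\ x <> 0) ->
  exists g, g <> 0 /\ invar g /\ forall y, I y <-> lmult g y.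
Proof.
move=> [HIl HIr] [x [Ix x0]].
have HD : nc_domain R by case: HR.
case: HR => _ [HL HRr].
have [g Hg] := HL I HIl; have [h Hh] := HRr I HIr.
have g0 : g <> 0 by move=> g0; case: ((Hg x).1 Ix) => r; rewrite g0 mulr0.
have easy z : exists z', g * z = z' * g.
  have : I (g * z) by case: HIr => _; apply; apply/Hg; apply: lm_self.
  by case/Hg => z' ->; exists z'.
have [v gv] := (Hh g).1 ((Hg g).2 (lm_self g)).
have [u hu] := (Hg h).1 ((Hh h).2 (rm_self h)).
have [v' ev'] := easy v.
have uv : u * v' = 1.
  apply: (@cancel_r _ HD g) => //; by rewrite mul1r -mulrA -ev' mulrA -hu -gv.
have vu := inv_comm HD uv.
exists g; split => //; split => //; split => // z.
have : I (u * (z * g)) by case: HIl => _; apply; apply/Hg; exists z.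
case/Hh => r e; exists r.
have : v' * (u * (z * g)) = v' * (u * (g * r)) by rewrite e hu -mulrA.
by rewrite !mulrA vu !mul1r.
Qed.

Lemma inv_left (R : unitRingType) (HD : nc_domain R) (g w a : R) :
  invar g -> g <> 0 -> a <> 0 -> g = w * a -> exists w', g = a * w'.
Proof.
move=> [H1 H2] g0 a0 e.
have [f ef] := H2 a.
have gfw : g = f * w.
  apply: (@cancel_r _ HD a) => //; by rewrite ef {1}e mulrA.
have [w' ew'] := H1 w.
exists w'; apply: (@cancel_l _ HD g) => //.
by rewrite {1}gfw -mulrA ew' mulrA -ef -mulrA.
Qed.

Lemma surj_inj (R : unitRingType) (HR : is_PID R) (c : R) (f : R -> R) :
  (forall x y, f (x - y) = f x - f y) ->
  (forall x, lmult c x -> lmult c (f x)) ->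
  (forall n, left_ideal (fun x => lmult c (iter n f x))) ->
  (forall z, exists y, lmult c (z - f y)) ->
  forall x, lmult c (f x) -> lmult c x.
Proof.
move=> fB fC Hi Hs.
have fiB n x y : iter n f (x - y) = iter n f x - iter n f y.
  by elim: n => [|n IH] //=; rewrite IH fB.
have fiC n x : lmult c x -> lmult c (iter n f x).
  by elim: n => [|n IH] //= /IH; apply: fC.
have [N HN] := @acc_left _ HR (fun n x => lmult c (iter n f x)) Hi
  (fun n y H => fC _ H).
have sN n z : exists y, lmult c (z - iter n f y).
  elim: n z => [|n IH] z; first by exists z; rewrite subrr; apply: lm0.
  have [y Hy] := IH z; have [y' Hy'] := Hs y; exists y'.
  have -> : z - iter n.+1 f y' = (z - iter n f y) + iter n f (y - f y').
    by rewrite fiB -iterSr /= addrA subrK.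
  by apply: lmD => //; apply: fiC.
move=> x Hx; have [y Hy] := sN N x.
have H1 : lmult c (iter N.+1 f y).
  have -> : iter N.+1 f y = f x - f (x - iter N f y) by rewrite fB /= opprB addrC subrK.
  by apply: lmB => //; apply: fC.
have H2 := HN _ _ H1.
have -> : x = (x - iter N f y) + iter N f y by rewrite subrK.
exact: lmD.
Qed.

Definition em (R : unitRingType) (c x y : R) := lmult c (x - y).

Lemma em_refl (R : unitRingType) (c x : R) : em c x x.
Proof. by rewrite /em subrr; apply: lm0. Qed.
Lemma em_sym (R : unitRingType) (c x y : R) : em c x y -> em c y x.
Proof. by rewrite /em => /lmN; rewrite opprB. Qed.
Lemma em_trans (R : unitRingType) (c x y z : R) : em c x y -> em c y z -> em c x z.
Proof.
rewrite /em => h1 h2; have -> : x - z = (x - y) + (y - z) by rewrite addrA subrK.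
exact: lmD.
Qed.
Lemma em_add (R : unitRingType) (c x x' y y' : R) :
  em c x x' -> em c y y' -> em c (x + y) (x' + y').
Proof. by rewrite /em opprD addrACA; apply: lmD. Qed.
Lemma em_mul (R : unitRingType) (c r x y : R) : em c x y -> em c (r * x) (r * y).
Proof. by rewrite /em -mulrBr; apply: lm_mul. Qed.

Lemma sim_sym (R : unitRingType) (b c : R) : Defs.similar b c -> Defs.similar c b.
Proof.
case=> f [P1 [P2 [P3 [P4 P5]]]].
have [g Hg] := @choice_fun _ _ (fun z x => lmult c (f x - z)) P5.
have Hg' z : em c (f (g z)) z by apply: Hg.
exists g; split; [|split; [|split; [|split]]].
- move=> x y h; apply: P4.
  apply: (em_trans (Hg' x)); apply: (em_trans h); exact: em_sym.
- move=> x y; apply: P4.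
  apply: (em_trans (Hg' _)); apply: em_sym.
  apply: (em_trans (P2 _ _)); exact: em_add.
- move=> r x; apply: P4.
  apply: (em_trans (Hg' _)); apply: em_sym.
  apply: (em_trans (P3 _ _)); exact: em_mul.
- move=> x y /P1 h.
  apply: (em_trans (em_sym (Hg' x))); apply: (em_trans h); exact: Hg'.
- move=> z; exists (f z); apply: P4; exact: Hg'.
Qed.

Lemma iter_mulr (R : unitRingType) (t x : R) n : iter n (fun y => y * t) x = x * t ^+ n.
Proof. by elim: n => [|n IH] /=; rewrite ?expr0 ?mulr1 // IH exprSr mulrA. Qed.

Lemma sum_li (R : unitRingType) (t a : R) :
  left_ideal (fun y => exists u v, y = u * t + v * a).
Proof.
split; [split|].
- by exists 0, 0; rewrite !mul0r addr0.
- move=> x y [u [v ->]] [u' [v' ->]]; exists (u - u'), (v - v').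
  by rewrite !mulrBl opprD addrACA.
- move=> r x [u [v ->]]; exists (r * u), (r * v); by rewrite mulrDr !mulrA.
Qed.

Lemma endo_cred (R : unitRingType) (HR : is_PID R) (a t k : R) :
  a <> 0 -> lmult a (a * t) -> ~ lmult a t -> ~ lmult a k -> lmult a (k * t) ->
  c_reducible a.
Proof.
move=> a0 Hat Ht Hk Hkt.
have HD : nc_domain R by case: HR.
have HR' := HR; case: HR' => _ [HL _].
have [c Hc] := HL _ (sum_li t a).
have HK : left_ideal (fun x => lmult a (x * t)).
  split; [split|].
  - by rewrite mul0r; apply: lm0.
  - by move=> x y hx hy; rewrite mulrBl; apply: lmB.
  - by move=> r x hx; rewrite -mulrA; apply: lm_mul.
have [b' Hb'] := HL _ HK.
have [c' ea] : lmult c a by apply/Hc; exists 0, 1; rewrite mul0r mul1r add0r.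
have [u0 et] : lmult c t by apply/Hc; exists 1, 0; rewrite mul0r mul1r addr0.
have c0 : c <> 0 by move=> c0; apply: Ht; rewrite et c0 mulr0; apply: lm0.
case: (boolP (c \is a GRing.unit)) => cU.
  exfalso; apply: Hk.
  apply: (@surj_inj _ HR a (fun x => x * t)) Hkt.
  - by move=> x y; rewrite mulrBl.
  - by move=> x [r ->]; rewrite -mulrA; apply: lm_mul.
  - move=> n; split; [split|]; rewrite ?iter_mulr.
    + by rewrite mul0r; apply: lm0.
    + by move=> x y; rewrite !iter_mulr mulrBl; apply: lmB.
    + by move=> r x; rewrite !iter_mulr -mulrA; apply: lm_mul.
  - move=> z; case/unitrP: cU => ci [h1 h2].
    have : lmult c z by exists (z * ci); rewrite -mulrA h1 mulr1.
    by case/Hc => u [v ->]; exists u; rewrite addrC addKr; apply: lm_mulr.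
have [b'' ea2] : lmult b' a by apply/Hb'.
have sim : Defs.similar b' c'.
  exists (fun x => x * u0); split; [|split; [|split; [|split]]].
  - move=> x y /Hb'; rewrite et mulrA => -[r]; rewrite ea mulrA.
    by move/(cancel_r HD c0) => e; exists r; rewrite -mulrBl.
  - by move=> x y; rewrite mulrDl subrr; apply: lm0.
  - by move=> r x; rewrite mulrA subrr; apply: lm0.
  - move=> x y [r e]; apply/Hb'; exists r.
    by rewrite et mulrA mulrBl e ea mulrA.
  - move=> z; have : lmult c (z * c) by apply: lm_mulr.
    case/Hc => v [w e]; exists v.
    have e2 : z = v * u0 + w * c'.
      by apply: (cancel_r HD c0); rewrite e et ea mulrDl !mulrA.
    by rewrite e2 opprD addrA subrr add0r; apply: lmN; apply: lm_mulr.
split => //; exists c', c, b'', b'; split; first exact: ea; split; first exact: ea2.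
split; [|split; [|split; [|split]]].
- apply/negP => /unitrP [ci [h1 h2]]; apply: Ht.
  by exists (u0 * ci); rewrite et -mulrA ea (mulrA ci) h1 mul1r.
- exact: cU.
- apply/negP => /unitrP [bi [h1 h2]]; apply: Hk.
  have : lmult b' k by apply/Hb'.
  by case=> r ->; exists (r * bi); rewrite -mulrA ea2 (mulrA bi) h1 mul1r.
- apply/negP => /unitrP [bi [h1 h2]]; apply: Ht.
  have : lmult a (1 * t) by apply/Hb'; exists bi.
  by rewrite mul1r.
- exact: sim_sym.
Qed.

Lemma linv_nonunit (R : unitRingType) (HD : nc_domain R) (x r : R) :
  ~~ (x \is a GRing.unit) -> r * x <> 1.
Proof. by move=> /negP xU e; apply: xU; case: (linv_unit HD e). Qed.

Lemma rinv_nonunit (R : unitRingType) (HD : nc_domain R) (x r : R) :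
  ~~ (x \is a GRing.unit) -> x * r <> 1.
Proof. by move=> /negP xU e; apply: xU; case: (linv_unit HD e). Qed.

Lemma bounded_case (R : unitRingType) (HR : is_PID R) (a x y q : R) (n : nat) :
  a <> 0 -> a = x * y -> ~~ (x \is a GRing.unit) -> ~~ (y \is a GRing.unit) ->
  q <> 0 -> invar q -> lmult a (q ^+ n) -> c_reducible a.
Proof.
move=> a0 axy xU yU q0 Hq Hqn.
have HD : nc_domain R by case: HR.
set B := fun b => forall r s, lmult a (r * b * s).
have HB : twosided_ideal B.
  split; split; try split.
  - by move=> r s; rewrite mulr0 mul0r; apply: lm0.
  - by move=> b1 b2 h1 h2 r s; rewrite mulrBr mulrBl; apply: lmB.
  - by move=> r' b hb r s; rewrite mulrA; apply: hb.
  - by move=> r s; rewrite mulr0 mul0r; apply: lm0.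
  - by move=> b1 b2 h1 h2 r s; rewrite mulrBr mulrBl; apply: lmB.
  - by move=> r' b hb r s; rewrite mulrA -mulrA; apply: hb.
have [g [g0 [Hg HBg]]] : exists g, g <> 0 /\ invar g /\ forall y, B y <-> lmult g y.
  apply: twosided_gen => //; exists (q ^+ n); split; last exact: exp_neq0.
  move=> r s; have [s' e] := (invar_exp n Hq).2 s.
  by rewrite -mulrA e mulrA; apply: lm_mul.
have Bg : B g by apply/HBg; apply: lm_self.
have [w gw] : lmult a g by have := Bg 1 1; rewrite mul1r mulr1.
have y0 : y <> 0 by move=> y0; apply: a0; rewrite axy y0 mulr0.
have [t0 gt0] : exists t0, g = y * t0.
  by apply: (inv_left HD Hg g0 y0 (w := w * x)); rewrite gw axy mulrA.
have nBt0 : ~ B t0.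
  move/HBg => [r e]; apply: (rinv_nonunit HD (r := r) yU).
  by apply: (cancel_r HD g0); rewrite mul1r -mulrA -e -gt0.
have [r [s Hrs]] : exists r s, ~ lmult a (r * t0 * s).
  case: (excluded_middle_informative (exists r s, ~ lmult a (r * t0 * s))) => // H.
  exfalso; apply: nBt0 => r s.
  case: (excluded_middle_informative (lmult a (r * t0 * s))) => // H2.
  by exfalso; apply: H; exists r, s.
apply: (@endo_cred _ HR a (t0 * s) y a0).
- have -> : a * (t0 * s) = x * g * s by rewrite {1}axy gt0 !mulrA.
  exact: (Bg x s).
- by move=> h; apply: Hrs; rewrite -mulrA; apply: lm_mul.
- move=> [r' e]; apply: (linv_nonunit HD (r := r') xU).
  by apply: (cancel_r HD y0); rewrite mul1r -mulrA -axy -e.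
- by rewrite mulrA -gt0 -(mul1r g); exact: (Bg 1 s).
Qed.

Lemma iter_mull (R : unitRingType) (t x : R) n : iter n (fun y => t * y) x = t ^+ n * x.
Proof. by elim: n => [|n IH] /=; rewrite ?expr0 ?mul1r // IH exprS mulrA. Qed.

Lemma unbounded_case (R : unitRingType) (HR : is_PID R) (a r p s q w0 : R) :
  a <> 0 -> a = r * p * s -> ~~ (p \is a GRing.unit) -> q <> 0 -> invar q ->
  q = w0 * p -> (forall n, ~ lmult a (q ^+ n)) -> c_reducible a.
Proof.
move=> a0 arps pU q0 Hq qw Hnb.
have HD : nc_domain R by case: HR.
have HR' := HR; case: HR' => _ [HL _].
set K := fun n x => lmult a (q ^+ n * x).
have HKi n : left_ideal (K n).
  split; [split|].
  - by rewrite /K mulr0; apply: lm0.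
  - by move=> x y hx hy; rewrite /K mulrBr; apply: lmB.
  - move=> r0 x hx; rewrite /K; have [r' e] := (invar_exp n Hq).2 r0.
    by rewrite mulrA e -mulrA; apply: lm_mul.
have HKm n y : K n y -> K n.+1 y.
  by rewrite /K exprS -mulrA; case=> v ->; rewrite mulrA; apply: lm_mulr.
have [N1 HN1] := acc_left HR HKi HKm.
set L := fun n y => exists u v, y = u * q ^+ n + v * a.
have HLi n : left_ideal (L n) by apply: sum_li.
have HLm n y : L n.+1 y -> L n y.
  by case=> u [v ->]; exists (u * q), v; rewrite exprS mulrA.
have HLa n : L n a by exists 0, 1; rewrite mul0r mul1r add0r.
have [N2 HN2] := dcc_left HR a0 HLi HLm HLa.
set N := (N1 + N2).+1.
have KN y : K (N + N) y -> K N y.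
  move/HN1 => h; apply: (li_mono HKm _ h); rewrite /N; apply: leqW; exact: leq_addr.
have LN y : L N y -> L (N + N) y.
  move=> h; apply: HN2; first by rewrite /N; apply: leqW; apply: (leq_trans (leq_addl N1 N2)); apply: leq_addr.
  by apply: (li_anti HLm _ h); rewrite /N; apply: leqW; exact: leq_addl.
set g := q ^+ N.
have g0 : g <> 0 by apply: exp_neq0.
have Hg : invar g by apply: invar_exp.
have gg : q ^+ (N + N) = g * g by rewrite exprD.
have [d Hd] := HL _ (HLi N).
have [e He] := HL _ (HKi N).
have [d' ead] : lmult d a by apply/Hd.
have [e' eae] : lmult e a by apply/He; rewrite /K; apply: lm_mulr.
have d0 : d <> 0 by move=> h; apply: a0; rewrite ead h mulr0.
have surjR z : exists y, K N (z - g * y).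
  have [z' ez] := Hg.2 z.
  have : L (N + N) (g * z) by apply: LN; exists z', 0; rewrite ez mul0r addr0.
  case=> u [v]; rewrite gg; have [u1 e1] := Hg.1 u; have [u2 e2] := Hg.1 u1.
  rewrite mulrA e1 -mulrA e2 => e3; exists u2.
  rewrite /K mulrBr e3 addrC addKr; apply: lm_mulr.
have capK z : K N z -> L N z -> lmult a z.
  move=> hK [u [v ez]]; have [u1 e1] := Hg.1 u.
  have h1 : K (N + N) u1.
    rewrite /K gg -mulrA; move: hK; rewrite /K ez mulrDr e1 (mulrA g v a) => hK.
    have -> : g * (g * u1) = (g * (g * u1) + g * v * a) - g * v * a by rewrite addrK.
    by apply: lmB => //; apply: lm_mulr.
  move: (KN _ h1); rewrite /K -/g => h2.
  by rewrite ez e1; apply: lmD => //; apply: lm_mulr.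
have dU : ~~ (d \is a GRing.unit).
  apply/negP => /unitrP [di [h1 h2]].
  have Hs : lmult (p * s) s.
    apply: (@surj_inj _ HR (p * s) (fun x => q * x)).
    - by move=> x y; rewrite mulrBr.
    - by move=> x [r0 ->]; rewrite mulrA; apply: lm_mulr.
    - move=> n; split; [split|]; rewrite ?iter_mull.
      + by rewrite mulr0; apply: lm0.
      + by move=> x y; rewrite !iter_mull mulrBr; apply: lmB.
      + move=> r0 x; rewrite !iter_mull; have [r' e0] := (invar_exp n Hq).2 r0.
        by rewrite mulrA e0 -mulrA; apply: lm_mul.
    - move=> z; have : L N z by apply/Hd; exists (z * di); rewrite -mulrA h1 mulr1.
      case=> u [v ez]; have [u1 e1] := Hg.1 u.
      exists (q ^+ (N1 + N2) * u1).
      rewrite ez e1 /g /N exprS -mulrA addrC addKr arps !mulrA.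
      by rewrite -(mulrA _ p s); apply: lm_mulr.
    - by rewrite qw -mulrA; apply: lm_mulr.
  case: Hs => r1 e1; apply: (linv_nonunit HD (r := r1) pU).
  have s0 : s <> 0 by move=> h; apply: a0; rewrite arps h mulr0.
  by apply: (cancel_r HD s0); rewrite mul1r -mulrA -e1.
split => //; exists d', d, e', e.
split; first exact: ead; split; first exact: eae.
split; [|split; [exact: dU|split; [|split]]].
- apply/negP => /unitrP [di [h1 h2]]; apply: (Hnb N).
  have : lmult d g by apply/Hd; exists 1, 0; rewrite mul1r mul0r addr0.
  by rewrite -/g; case=> r0 ->; exists (r0 * di); rewrite -mulrA ead (mulrA di) h1 mul1r.
- apply/negP => /unitrP [ei [h1 h2]]; move/negP: dU; apply.
  have [y hy] := surjR 1.
  move/He: hy => [r0 e0].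
  have [y' ey] := Hg.2 y.
  have : L N 1.
    exists y', (r0 * ei); rewrite -ey -mulrA eae (mulrA ei) h1 mul1r -e0.
    by rewrite addrC subrK.
  by case/Hd => di edi; case: (linv_unit HD (esym edi)).
- apply/negP => /unitrP [ei [h1 h2]]; apply: (Hnb N).
  have : K N 1 by apply/He; exists ei.
  by rewrite /K mulr1.
- exists (fun x => x * d); split; [|split; [|split; [|split]]].
  + move=> x y [r0 e0]; rewrite -mulrBl e0 -mulrA -ead.
    by apply: lm_mul; apply/He; rewrite /K; apply: lm_mulr.
  + by move=> x y; rewrite mulrDl subrr; apply: lm0.
  + by move=> r0 x; rewrite mulrA subrr; apply: lm0.
  + move=> x y; rewrite -mulrBl => /He hK.
    have : lmult a ((x - y) * d) by apply: capK => //; apply/Hd; apply: lm_mulr.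
    case=> r0; rewrite ead mulrA => /(cancel_r HD d0) ->; apply: lm_mulr.
  + move=> z; have [y hy] := surjR z; have [y' ey] := Hg.2 y.
    have : lmult d (g * y) by apply/Hd; exists y', 0; rewrite ey mul0r addr0.
    case=> x0 ex; exists x0; rewrite -ex.
    have -> : g * y - z = - (z - g * y) by rewrite opprB.
    by apply: lmN; apply/He.
Qed.

Unset Implicit Arguments.
Set Strict Implicit.

Theorem proposition3p7 (R : unitRingType) (HR : is_PID R) (a : R) (ha : a <> 0)
  (hbf : exists r s p : R, a = r * p * s /\ bounded p /\ p \isn't a GRing.unit) :
  c_irreducible a <-> irreducible_elt a.
Proof.
have HD : nc_domain R by case: HR.
split; last first.
  move=> [_ Hirr] [_ [b [b' [c' [c [e1 [_ [bU [b'U _]]]]]]]]].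
  by case: (Hirr b b' e1) => h; [move/negP: bU | move/negP: b'U].
move=> Hci.
case: (excluded_middle_informative (irreducible_elt a)) => // Hni.
exfalso; apply: Hci.
case: hbf => r [s [p [arps [[I [HI [HIn HIp]]] pU]]]].
have aU : ~~ (a \is a GRing.unit).
  apply/negP => /unitrP [ai [h1 h2]].
  have h3 : r * (p * s * ai) = 1 by rewrite !mulrA -arps.
  have h4 := inv_comm HD h3.
  by apply: (rinv_nonunit HD (r := s * ai * r) pU); rewrite !mulrA.
have [x [y [axy [xU yU]]]] :
    exists x y, a = x * y /\ ~~ (x \is a GRing.unit) /\ ~~ (y \is a GRing.unit).
  case: (excluded_middle_informative
    (exists x y, a = x * y /\ ~~ (x \is a GRing.unit) /\ ~~ (y \is a GRing.unit))) => // H.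
  exfalso; apply: Hni; split => // b c e.
  case: (boolP (b \is a GRing.unit)) => bU; first by left.
  case: (boolP (c \is a GRing.unit)) => cU; first by right.
  by exfalso; apply: H; exists b, c.
have [q [q0 [Hq HIq]]] := twosided_gen HR HI HIn.
have [w0 qw] : lmult p q by apply: HIp; apply/HIq; apply: lm_self.
case: (excluded_middle_informative (exists n, lmult a (q ^+ n))) => Hb.
  case: Hb => n Hn; exact: (bounded_case HR ha axy xU yU q0 Hq Hn).
apply: (unbounded_case HR ha arps pU q0 Hq qw) => n hn.
by apply: Hb; exists n.
Qed.
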